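(* Let $K$ be a ramified quadratic extension of $\mathbb{Q}_2$, $d=2m$ with $m$ odd, $m\ge3$, and $f=a_1x_1^d+\dots+a_sx_s^d$ with all $a_i\in\mathcal{O}\setminus\{0\}$. Suppose that for some level $k$, $f$ has four distinct variables at level $k$ that can be split into two disjoint pairs, each pair consisting of two variables with the same $\pi$-coefficient, and that $f$ has a variable in at least one of the levels $k+2$, $k+3$, $k+4$. Then $f$ has a nontrivial zero in $K$.
   Context: $\mathcal{O}$ is the ring of integers of $K$ and $\pi$ the uniformizer: $\pi=\sqrt{2},\sqrt{-2},\sqrt{10},\sqrt{-10},1+\sqrt{-1},1+\sqrt{-5}$ for $K=\mathbb{Q}_2(\sqrt2),\mathbb{Q}_2(\sqrt{-2}),\mathbb{Q}_2(\sqrt{10}),\mathbb{Q}_2(\sqrt{-10}),\mathbb{Q}_2(\sqrt{-1}),\mathbb{Q}_2(\sqrt{-5})$ respectively. Each unit $u$ has a unique expansion $u=c_0+c_1\pi+c_2\pi^2+\cdots$ with $c_j\in\{0,1\}$, $c_0=1$. Writing $a_i=\pi^r u$ with $u$ a unit, the variable $x_i$ is at level $r\bmod d$ (levels are residues modulo $d$), and its $\pi$-coefficient is $c_1$ of $u$. A nontrivial zero is a point of $K^s$, not all coordinates zero, where $f$ vanishes. *)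

(* Defs.v *)
(* The 2-adic ring of integers O of K = Q_2(sqrt D) is
   modelled as the inverse limit  O = lim_n (Z/2^n Z)[sqrt D]:
   an element is a coherent sequence of pairs (a_n, b_n) of integers,
   a_n + b_n sqrt D, taken modulo 2^n. *)
From Stdlib Require Import ZArith List Arith.
Open Scope Z_scope.

(* The six ramified quadratic extensions K = Q_2(sqrt D). *)
Definition ramified_D (D : Z) : Prop :=
  D = 2 \/ D = -2 \/ D = 10 \/ D = -10 \/ D = -1 \/ D = -5.

(* elements a + b sqrt D of Z[sqrt D] *)
Definition ZD := (Z * Z)%type.
Definition addZD (x y : ZD) : ZD := (fst x + fst y, snd x + snd y).
Definition mulZD (D : Z) (x y : ZD) : ZD :=
  (fst x * fst y + D * snd x * snd y, fst x * snd y + snd x * fst y).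
Definition zeroZD : ZD := (0, 0).
Definition oneZD : ZD := (1, 0).
Definition ofZ (z : Z) : ZD := (z, 0).
Fixpoint powZD (D : Z) (x : ZD) (k : nat) : ZD :=
  match k with O => oneZD | S k' => mulZD D x (powZD D x k') end.

Definition congr (n : nat) (x y : ZD) : Prop :=
  (2 ^ Z.of_nat n | fst x - fst y) /\ (2 ^ Z.of_nat n | snd x - snd y).

Record Oel := { oseq : nat -> ZD;
                ocoh : forall n, congr n (oseq (S n)) (oseq n) }.

Definition eqS (x y : nat -> ZD) : Prop := forall n, congr n (x n) (y n).
Definition eqO (x y : Oel) : Prop := eqS (oseq x) (oseq y).

(* the uniformizer: sqrt D for D = +-2, +-10; 1 + sqrt D for D = -1, -5 *)
Definition piZD (D : Z) : ZD :=
  if orb (Z.eqb D (-1)) (Z.eqb D (-5)) then (1, 1) else (0, 1).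

Definition isUnitO (D : Z) (u : Oel) : Prop :=
  exists v : Oel, eqS (fun n => mulZD D (oseq u n) (oseq v n)) (fun _ => oneZD).

(* a = pi^r u with u a unit, and the pi-coefficient c1 of u is c
   (i.e. u = 1 + c*pi + pi^2 * w for some w in O, c in {0,1}). *)
Definition decomp (D : Z) (a : Oel) (r : nat) (c : bool) : Prop :=
  exists u : Oel, isUnitO D u /\
    eqS (oseq a) (fun n => mulZD D (powZD D (piZD D) r) (oseq u n)) /\
    exists w : Oel,
      eqS (oseq u)
        (fun n => addZD (addZD oneZD (mulZD D (ofZ (if c then 1 else 0)) (piZD D)))
                        (mulZD D (powZD D (piZD D) 2) (oseq w n))).

Definition level_coef (D : Z) (d : nat) (a : Oel) (l : nat) (c : bool) : Prop :=
  exists r : nat, decomp D a r c /\ Nat.modulo r d = Nat.modulo l d.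

Definition at_level (D : Z) (d : nat) (a : Oel) (l : nat) : Prop :=
  exists c : bool, level_coef D d a l c.

Definition sumZD (s : nat) (F : nat -> ZD) : ZD :=
  fold_right (fun i acc => addZD (F i) acc) zeroZD (List.seq 0 s).

Fixpoint maxl (s : nat) (e : nat -> nat) : nat :=
  match s with O => O | S s' => Nat.max (e s') (maxl s' e) end.

(* A point of K^s is written (x_i / 2^(e_i))_i with x_i in O (K = O[1/2]).
   f = sum a_i X_i^d vanishes there iff, after clearing the common
   denominator 2^(E d) with E = max e_i, sum a_i x_i^d 2^((E-e_i) d) = 0 in O;
   it is nontrivial iff some x_i is nonzero in O. *)
Definition has_nontrivial_zero_K (D : Z) (d s : nat) (a : nat -> Oel) : Prop :=
  exists (x : nat -> Oel) (e : nat -> nat),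
    (exists i, (i < s)%nat /\ ~ eqS (oseq (x i)) (fun _ => zeroZD)) /\
    eqS (fun n => sumZD s (fun i =>
           mulZD D (oseq (a i) n)
             (mulZD D (powZD D (oseq (x i) n) d)
                      (ofZ (2 ^ Z.of_nat ((maxl s e - e i) * d)%nat)))))
        (fun _ => zeroZD).

(* Main.v *)
Require Import Defs.
From Stdlib Require Import ZArith List Arith Lia Bool.
Import ListNotations.
Open Scope Z_scope.

Definition y0 (D : Z) : ZD := addZD oneZD (piZD D).
Definition qq (D : Z) : ZD := mulZD D (y0 D) (y0 D).
Definition Mv (D : Z) (code : nat) : ZD :=
  match code with O => zeroZD | 1%nat => oneZD | _ => qq D end.
Definition ysel (o : nat) : nat * nat :=
  match o with O => (0%nat,0%nat) | 1%nat => (1%nat,1%nat) | 2%nat => (2%nat,1%nat)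
  | 3%nat => (1%nat,2%nat) | _ => (2%nat,2%nat) end.
Definition pv (D : Z) (u1 u2 : ZD) (o : nat) : ZD :=
  addZD (mulZD D u1 (Mv D (fst (ysel o)))) (mulZD D u2 (Mv D (snd (ysel o)))).
Definition Fv (D : Z) (j : nat) (u5 : ZD) (o5 : nat) : ZD :=
  mulZD D (mulZD D (powZD D (piZD D) j) u5) (Mv D o5).

Definition PbD (D : Z) (x : ZD) : bool := Z.even (fst x + (if Z.odd D then snd x else 0)).
Definition cl (D : Z) (x : ZD) : Z * Z :=
  if Z.odd D then ((fst x - snd x) mod 4, snd x mod 2) else (fst x mod 4, snd x mod 2).
Definition clE (D : Z) (x : ZD) : Z * Z := cl D (fst x / 2, snd x / 2).
Definition addG (x y : Z * Z) : Z * Z := ((fst x + fst y) mod 4, (snd x + snd y) mod 2).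
Definition evenb (x : ZD) : bool := Z.even (fst x) && Z.even (snd x).

Definition allZ8 : list Z := [0;1;2;3;4;5;6;7].
Definition allP8 : list ZD := list_prod allZ8 allZ8.
Definition cpi (D : Z) (c : bool) : ZD := mulZD D (ofZ (if c then 1 else 0)) (piZD D).
Definition constr (D : Z) (c : bool) (u : ZD) : bool :=
  Z.even (fst u - 1 - fst (cpi D c)) && Z.even (snd u - snd (cpi D c)).
Definition units8 (D : Z) (c : bool) : list ZD := filter (constr D c) allP8.
Definition unitsAll (D : Z) : list ZD := filter (fun u => negb (PbD D u)) allP8.

Definition pzdec : forall x y : Z * Z, {x = y} + {x <> y}.
Proof. decide equality; apply Z.eq_dec. Defined.
Definition lpzdec := list_eq_dec pzdec.

Definition opts4 : list nat := [1;2;3;4]%nat.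
Definition prof (D : Z) (u : ZD * ZD) : list (Z * Z) :=
  map (fun o => clE D (pv D (fst u) (snd u) o)) opts4.
Definition profiles (D : Z) (c : bool) : list (list (Z * Z)) :=
  nodup lpzdec (map (prof D) (list_prod (units8 D c) (units8 D c))).
Definition fprof (D : Z) (j : nat) (u5 : ZD) : list (Z * Z) :=
  map (fun o => clE D (Fv D j u5 o)) [1;2]%nat.
Definition fprofiles (D : Z) (j : nat) : list (list (Z * Z)) :=
  nodup lpzdec (map (fprof D j) (unitsAll D)).
Definition gsel (p : list (Z * Z)) (o : nat) : Z * Z :=
  match o with O => (0,0) | S o' => nth o' p (0,0) end.
Definition opts : list (nat * nat * nat) :=
  (list_prod (list_prod [0;1;2;3;4] [0;1;2;3;4]) [0;1;2])%nat.
Definition pzeqb (x y : Z * Z) : bool := Z.eqb (fst x) (fst y) && Z.eqb (snd x) (snd y).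
Definition okopt (p1 p2 f : list (Z * Z)) (o : nat * nat * nat) : bool :=
  let '(o1, o2, o5) := o in
  negb (Nat.eqb o1 0 && Nat.eqb o2 0) &&
  pzeqb (addG (addG (gsel p1 o1) (gsel p2 o2)) (gsel f o5)) (0,0).
Definition comb_ok (D : Z) (j : nat) (c c' : bool) : bool :=
  let P1 := profiles D c in let P2 := profiles D c' in let FP := fprofiles D j in
  forallb (fun p1 => forallb (fun p2 => forallb (fun f =>
     existsb (okopt p1 p2 f) opts) FP) P2) P1.
Definition evenok (D : Z) (c : bool) : bool :=
  forallb (fun u => forallb (fun o => evenb (pv D (fst u) (snd u) o)) opts4)
    (list_prod (units8 D c) (units8 D c)).
Definition evenF (D : Z) (j : nat) : bool :=
  forallb (fun u => forallb (fun o => evenb (Fv D j u o)) [1;2]%nat) (unitsAll D).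
Definition check (D : Z) : bool :=
  forallb (fun j => forallb (fun c => evenok D c && evenF D j && forallb (fun c' =>
    comb_ok D j c c') [false; true]) [false; true]) [2;3;4]%nat.

Lemma check_all D : ramified_D D -> check D = true.
Proof. intros [->|[->|[->|[->|[->| ->]]]]]; vm_compute; reflexivity. Qed.

From Stdlib Require Import ZArith List Arith Lia Ring Znumtheory ClassicalDescription.
Open Scope Z_scope.

Definition oppZD (x : ZD) : ZD := (- fst x, - snd x).
Definition subZD (x y : ZD) : ZD := addZD x (oppZD y).

Lemma ZD_eq (x y : ZD) : fst x = fst y -> snd x = snd y -> x = y.
Proof. destruct x, y; simpl; intros; subst; reflexivity. Qed.

Lemma ZDth (D : Z) : ring_theory zeroZD oneZD addZD (mulZD D) subZD oppZD (@eq ZD).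
Proof.
  constructor; intros.
  all: repeat match goal with p : ZD |- _ => destruct p end.
  all: unfold subZD, addZD, mulZD, oppZD, zeroZD, oneZD; cbn [fst snd]; f_equal; ring.
Qed.

Infix "+'" := addZD (at level 50, left associativity).
Infix "-'" := subZD (at level 50, left associativity).

Section Alg.
Variable D : Z.
Add Ring ZDr : (ZDth D).
Local Infix "*'" := (mulZD D) (at level 40, left associativity).
Local Notation pi := (piZD D).
Local Notation "x ^' k" := (powZD D x k) (at level 30).

Lemma pow_add x a b : x ^' (a + b) = x ^' a *' x ^' b.
Proof. induction a; simpl. change (1%Z, 0%Z) with oneZD. ring. rewrite IHa. ring. Qed.

Lemma pow_mul x y k : (x *' y) ^' k = x ^' k *' y ^' k.
Proof. induction k; simpl. change (1%Z, 0%Z) with oneZD. ring. rewrite IHk. ring. Qed.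

Lemma pow_pow x a b : (x ^' a) ^' b = x ^' (a * b).
Proof. induction b; simpl. rewrite Nat.mul_0_r. reflexivity.
  rewrite IHb, Nat.mul_succ_r, pow_add. ring. Qed.

Lemma pow_one k : oneZD ^' k = oneZD.
Proof. induction k; simpl; [reflexivity|rewrite IHk; ring]. Qed.

Lemma pow_S x k : x ^' S k = x *' x ^' k.
Proof. reflexivity. Qed.

Lemma ofZ_add a b : ofZ (a + b) = ofZ a +' ofZ b.
Proof. apply ZD_eq; simpl; ring. Qed.
Lemma ofZ_mul a b : ofZ (a * b) = ofZ a *' ofZ b.
Proof. apply ZD_eq; simpl; ring. Qed.
Lemma ofZ_1 : ofZ 1 = oneZD. Proof. reflexivity. Qed.
Lemma ofZ_0 : ofZ 0 = zeroZD. Proof. reflexivity. Qed.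
Lemma ofZ_pow a k : ofZ (a ^ Z.of_nat k) = ofZ a ^' k.
Proof. induction k. reflexivity. rewrite Nat2Z.inj_succ, Z.pow_succ_r by lia.
  rewrite ofZ_mul, IHk. simpl. ring. Qed.

Lemma binom1 (n : nat) (z h : ZD) : exists P,
  (z +' h) ^' S n = z ^' S n +' ofZ (Z.of_nat (S n)) *' z ^' n *' h +' h *' h *' P.
Proof.
  induction n.
  - exists zeroZD. simpl. change (1%Z,0%Z) with oneZD. change (ofZ 1) with oneZD. ring.
  - destruct IHn as [P HP]. exists (z *' P +' ofZ (Z.of_nat (S n)) *' z ^' n +' h *' P).
    rewrite pow_S, HP. rewrite (pow_S z (S n)), (pow_S z n).
    rewrite (Nat2Z.inj_succ (S n)). unfold Z.succ. rewrite ofZ_add, ofZ_1. ring.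
Qed.

(* parity / residue mod pi *)
Definition Pb (x : ZD) : bool := Z.even (fst x + (if Z.odd D then snd x else 0)).

Lemma even_shift u k : Z.even (u + 2 * k) = Z.even u.
Proof. rewrite Z.even_add, Z.even_mul. simpl. destruct (Z.even u); reflexivity. Qed.

Lemma Pb_add x y : Pb (x +' y) = Bool.eqb (Pb x) (Pb y).
Proof. destruct x as [a b], y as [c e]; unfold Pb, addZD; simpl.
  replace (a + c + (if Z.odd D then b + e else 0)) with
    ((a + (if Z.odd D then b else 0)) + (c + (if Z.odd D then e else 0)))
    by (destruct (Z.odd D); ring).
  rewrite Z.even_add. reflexivity. Qed.

Lemma Pb_mul x y : Pb (x *' y) = orb (Pb x) (Pb y).
Proof. destruct x as [a b], y as [c e]; unfold Pb, mulZD; simpl.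
  destruct (Z.odd D) eqn:HD.
  - destruct (Z.odd_spec D) as [H _]. destruct (H HD) as [t Ht].
    replace (a * c + D * b * e + (a * e + b * c)) with
      ((a + b) * (c + e) + 2 * (t * b * e)) by (subst; ring).
    rewrite even_shift, Z.even_mul. reflexivity.
  - assert (Z.even D = true) by (rewrite <- Z.negb_odd, HD; reflexivity).
    destruct (proj1 (Z.even_spec D) H) as [t Ht].
    replace (a * c + D * b * e + 0) with (a * c + 0 + 2 * (t * b * e)) by (subst; ring).
    rewrite even_shift, !Z.add_0_r, Z.even_mul. reflexivity.
Qed.

Lemma Pb_ofZ o : Pb (ofZ o) = Z.even o.
Proof. unfold Pb, ofZ; simpl. destruct (Z.odd D); rewrite Z.add_0_r; reflexivity. Qed.

Definition vge (x : ZD) (K : nat) : Prop :=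
  exists o y, Z.odd o = true /\ ofZ o *' x = pi ^' K *' y.

Lemma odd_mul o o' : Z.odd o = true -> Z.odd o' = true -> Z.odd (o * o') = true.
Proof. intros; rewrite Z.odd_mul, H, H0; reflexivity. Qed.

Lemma vge_add x y K : vge x K -> vge y K -> vge (x +' y) K.
Proof. intros [o [u [Ho Hu]]] [o' [v [Ho' Hv]]].
  exists (o * o'), (ofZ o' *' u +' ofZ o *' v). split. apply odd_mul; auto.
  rewrite ofZ_mul. transitivity (ofZ o' *' (ofZ o *' x) +' ofZ o *' (ofZ o' *' y)). ring.
  rewrite Hu, Hv. ring. Qed.

Lemma vge_mul_l x y K : vge x K -> vge (y *' x) K.
Proof. intros [o [u [Ho Hu]]]. exists o, (y *' u). split; auto.
  transitivity (y *' (ofZ o *' x)). ring. rewrite Hu. ring. Qed.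

Lemma vge_mul_r x y K : vge x K -> vge (x *' y) K.
Proof. intros H. replace (x *' y) with (y *' x) by ring. apply vge_mul_l; auto. Qed.

Lemma vge_mulv x y K L : vge x K -> vge y L -> vge (x *' y) (K + L).
Proof. intros [o [u [Ho Hu]]] [o' [v [Ho' Hv]]].
  exists (o * o'), (u *' v). split. apply odd_mul; auto.
  rewrite ofZ_mul, pow_add. transitivity ((ofZ o *' x) *' (ofZ o' *' y)). ring.
  rewrite Hu, Hv. ring. Qed.

Lemma vge_pi K y : vge (pi ^' K *' y) K.
Proof. exists 1, y. split. reflexivity. rewrite ofZ_1. ring. Qed.

Lemma vge_0 K : vge zeroZD K.
Proof. replace zeroZD with (pi ^' K *' zeroZD) by ring. apply vge_pi. Qed.

Lemma vge_mono x K L : vge x K -> (L <= K)%nat -> vge x L.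
Proof. intros [o [u [Ho Hu]]] HL. exists o, (pi ^' (K - L) *' u). split; auto.
  rewrite Hu. assert (E : pi ^' K = pi ^' L *' pi ^' (K - L)) by (rewrite <- pow_add; f_equal; lia).
  rewrite E. ring. Qed.

Lemma vge_opp x K : vge x K -> vge (oppZD x) K.
Proof. intros H. replace (oppZD x) with (ofZ (-1) *' x).
  apply vge_mul_l; auto. apply ZD_eq; unfold ofZ, mulZD, oppZD; cbn [fst snd]; ring. Qed.

Lemma vge_sub x y K : vge x K -> vge y K -> vge (x -' y) K.
Proof. intros; apply vge_add; auto; apply vge_opp; auto. Qed.

Lemma vge_ext x y K : x = y -> vge x K -> vge y K.
Proof. intros ->; auto. Qed.

Section WithD.
Hypothesis hD : ramified_D D.

Lemma Pb_pi : Pb pi = true.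
Proof. unfold Pb; destruct hD as [->|[->|[->|[->|[->| ->]]]]]; reflexivity. Qed.
Lemma Pb_one : Pb oneZD = false.
Proof. unfold Pb, oneZD; simpl; destruct (Z.odd D); reflexivity. Qed.

Lemma Pb_pow_pos K y : Pb (pi ^' S K *' y) = true.
Proof. rewrite Pb_mul, pow_S, Pb_mul, Pb_pi. reflexivity. Qed.

Lemma vge1_Pb x : vge x 1 -> Pb x = true.
Proof. intros [o [y [Ho E]]]. apply (f_equal Pb) in E. rewrite Pb_mul, Pb_ofZ, Pb_pow_pos in E.
  rewrite <- Z.negb_odd, Ho in E. exact E. Qed.

Lemma pi_val : pi = if Z.odd D then (1,1) else (0,1).
Proof. destruct hD as [->|[->|[->|[->|[->| ->]]]]]; reflexivity. Qed.

Lemma pow1 x : x ^' 1 = x.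
Proof. simpl. change (1%Z,0%Z) with oneZD. ring. Qed.

Ltac zsimp := unfold mulZD, addZD, subZD, oppZD, ofZ, oneZD, zeroZD in *; cbn [fst snd] in *.

Lemma Pb_vge1 x : Pb x = true -> vge x 1.
Proof. destruct x as [a b]. unfold Pb, vge. rewrite pow1, pi_val. simpl fst; simpl snd.
  destruct hD as [->|[->|[->|[->|[->| ->]]]]]; simpl Z.odd; cbv iota;
  intro H; apply Z.even_spec in H; destruct H as [t Ht]; rewrite ?Z.add_0_r in Ht.
  - exists 1, (b, t). split; [reflexivity|]. apply ZD_eq; zsimp; lia.
  - exists 1, (b, -t). split; [reflexivity|]. apply ZD_eq; zsimp; lia.
  - exists 5, (5*b, t). split; [reflexivity|]. apply ZD_eq; zsimp; lia.
  - exists 5, (5*b, -t). split; [reflexivity|]. apply ZD_eq; zsimp; lia.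
  - exists 1, (t, b - t). split; [reflexivity|]. apply ZD_eq; zsimp; lia.
  - exists 3, (3*b - (b - t), b - t). split; [reflexivity|]. apply ZD_eq; zsimp; lia.
Qed.

Lemma vge1_iff x : vge x 1 <-> Pb x = true.
Proof. split; [apply vge1_Pb|apply Pb_vge1]. Qed.

Lemma pi_cancel y y' : pi *' y = pi *' y' -> y = y'.
Proof. destruct y as [a b], y' as [c e]. rewrite pi_val.
  destruct hD as [->|[->|[->|[->|[->| ->]]]]]; simpl Z.odd; cbv iota; zsimp;
  intro H; pose proof (f_equal fst H) as H1; pose proof (f_equal snd H) as H2; cbn [fst snd] in *; apply ZD_eq; cbn [fst snd]; lia. Qed.

Lemma pow_cancel K y y' : pi ^' K *' y = pi ^' K *' y' -> y = y'.
Proof. induction K; simpl; intro H.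
  - change (1%Z,0%Z) with oneZD in H. replace y with (oneZD *' y) by ring.
    rewrite H; ring.
  - apply IHK, pi_cancel. transitivity (pi *' powZD D pi K *' y). ring. rewrite H. ring.
Qed.
Lemma vge_cancel K y : vge (pi ^' K *' y) (S K) -> vge y 1.
Proof. intros [o [y' [Ho E]]]. exists o, y'. split; auto. rewrite pow1.
  apply (pow_cancel K). rewrite pow_S in E. transitivity (ofZ o *' (pi ^' K *' y)). ring.
  rewrite E. ring. Qed.

Definition val (x : ZD) (K : nat) : Prop :=
  exists o y, Z.odd o = true /\ ofZ o *' x = pi ^' K *' y /\ Pb y = false.

Lemma val_vge x K : val x K -> vge x K.
Proof. intros [o [y [Ho [E _]]]]. exists o, y; auto. Qed.

Lemma Pb_ofZ_odd o : Z.odd o = true -> Pb (ofZ o) = false.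
Proof. intro H. rewrite Pb_ofZ, <- Z.negb_odd, H. reflexivity. Qed.

Lemma val_not x K : val x K -> ~ vge x (S K).
Proof. intros [o [y [Ho [E Hy]]]] [o' [y' [Ho' E']]].
  assert (H : vge (ofZ o' *' y) 1).
  { exists 1, (ofZ o *' y'). split. reflexivity. rewrite ofZ_1, pow1.
    apply (pow_cancel K). transitivity (ofZ o' *' (ofZ o *' x)). rewrite E. ring.
    transitivity (ofZ o *' (ofZ o' *' x)). ring. rewrite E', pow_S. ring. }
  apply vge1_Pb in H. rewrite Pb_mul, Pb_ofZ_odd, Hy in H by auto. discriminate. Qed.

Lemma val_of x K : vge x K -> ~ vge x (S K) -> val x K.
Proof. intros [o [y [Ho E]]] Hn. exists o, y. split; auto. split; auto.
  destruct (Pb y) eqn:Hy; auto. exfalso. apply Hn.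
  apply Pb_vge1 in Hy. destruct Hy as [o' [y' [Ho' E']]].
  exists (o' * o), y'. split. apply odd_mul; auto. rewrite ofZ_mul, pow_S.
  transitivity (ofZ o' *' (ofZ o *' x)). ring. rewrite E.
  transitivity (pi ^' K *' (ofZ o' *' y)). ring. rewrite E', pow1. ring. Qed.

Lemma val_mul x y a b : val x a -> val y b -> val (x *' y) (a + b).
Proof. intros [o [u [Ho [Eu Hu]]]] [o' [v [Ho' [Ev Hv]]]].
  exists (o * o'), (u *' v). split. apply odd_mul; auto. split.
  rewrite ofZ_mul, pow_add. transitivity ((ofZ o *' x) *' (ofZ o' *' y)). ring.
  rewrite Eu, Ev. ring. rewrite Pb_mul, Hu, Hv. reflexivity. Qed.

Lemma val_pi K : val (pi ^' K) K.
Proof. exists 1, oneZD. split. reflexivity. split. rewrite ofZ_1. ring. apply Pb_one. Qed.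

Lemma val_unit x : Pb x = false -> val x 0.
Proof. intro H. exists 1, x. split. reflexivity. split. rewrite ofZ_1. simpl.
  change (1%Z,0%Z) with oneZD. ring. auto. Qed.

Lemma val_two : val (ofZ 2) 2.
Proof. unfold val, Pb. rewrite pi_val. simpl powZD.
  destruct hD as [->|[->|[->|[->|[->| ->]]]]]; simpl Z.odd; cbv iota.
  - exists 1, (1,0). repeat split. 
  - exists 1, (-1,0). repeat split.
  - exists 5, (1,0). repeat split.
  - exists 5, (-1,0). repeat split.
  - exists 1, (0,-1). repeat split.
  - exists 9, (-2,-1). repeat split.
Qed.

Lemma pi2_two : exists w, pi ^' 2 = ofZ 2 *' w.
Proof. rewrite pi_val. simpl powZD.
  destruct hD as [->|[->|[->|[->|[->| ->]]]]]; simpl Z.odd; cbv iota.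
  - exists (1,0); reflexivity.
  - exists (-1,0); reflexivity.
  - exists (5,0); reflexivity.
  - exists (-5,0); reflexivity.
  - exists (0,1); reflexivity.
  - exists (-2,1); reflexivity.
Qed.

Lemma vge_sum_exact x y K : vge x K -> vge y K -> ~ vge x (S K) -> ~ vge y (S K) ->
  vge (x +' y) (S K).
Proof. intros H1 H2 H3 H4.
  destruct (val_of x K H1 H3) as [o [u [Ho [Eu Hu]]]].
  destruct (val_of y K H2 H4) as [o' [v [Ho' [Ev Hv]]]].
  assert (Hs : Pb (ofZ o' *' u +' ofZ o *' v) = true).
  { rewrite Pb_add, !Pb_mul, !Pb_ofZ_odd, Hu, Hv by auto. reflexivity. }
  apply Pb_vge1 in Hs. destruct Hs as [o2 [w [Ho2 Ew]]].
  exists (o2 * (o * o')), w. split. repeat apply odd_mul; auto.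
  rewrite !ofZ_mul, pow_S.
  transitivity (ofZ o2 *' (ofZ o' *' (ofZ o *' x) +' ofZ o *' (ofZ o' *' y))). ring.
  rewrite Eu, Ev. transitivity (pi ^' K *' (ofZ o2 *' (ofZ o' *' u +' ofZ o *' v))). ring.
  rewrite Ew, pow1. ring. Qed.

Lemma rel_prime_2pow o n : Z.odd o = true -> Z.gcd (2 ^ Z.of_nat n) o = 1.
Proof. intro Ho. apply Zgcd_1_rel_prime. apply rel_prime_sym.
  assert (H2 : rel_prime o 2).
  { apply rel_prime_sym, prime_rel_prime. apply prime_2.
    intros [k Hk]. rewrite Hk in Ho. rewrite Z.odd_mul in Ho. simpl in Ho.
    rewrite Bool.andb_false_r in Ho. discriminate. }
  induction n. simpl. apply rel_prime_sym, rel_prime_1.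
  rewrite Nat2Z.inj_succ, Z.pow_succ_r by lia. apply rel_prime_mult; auto. Qed.

Definition div2n (n : nat) (x : ZD) : Prop :=
  (2 ^ Z.of_nat n | fst x) /\ (2 ^ Z.of_nat n | snd x).

Lemma vge_two_pow n : vge (ofZ 2 ^' n) (2 * n).
Proof. induction n. simpl. exists 1, oneZD. split; reflexivity.
  replace (2 * S n)%nat with (2 + 2 * n)%nat by lia. rewrite pow_S.
  apply vge_mulv; auto. apply val_vge, val_two. Qed.

Lemma div2n_vge n x : div2n n x -> vge x (2 * n).
Proof. intros [[a Ha] [b Hb]].
  replace x with (ofZ 2 ^' n *' (a, b)).
  apply vge_mul_r, vge_two_pow.
  rewrite <- ofZ_pow. destruct x as [x1 x2]. simpl in *. subst.
  apply ZD_eq; unfold ofZ, mulZD; cbn [fst snd]; ring. Qed.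

Lemma vge_div2n n x : vge x (2 * n) -> div2n n x.
Proof. intros [o [y [Ho E]]]. destruct pi2_two as [w Hw].
  rewrite <- pow_pow, Hw, pow_mul, <- ofZ_pow in E.
  set (Y := w ^' n *' y) in *.
  assert (E' : ofZ o *' x = ofZ (2 ^ Z.of_nat n) *' Y) by (rewrite E; unfold Y; ring).
  pose proof (f_equal fst E') as E1. pose proof (f_equal snd E') as E2.
  destruct x as [a b]. unfold ofZ, mulZD in E1, E2. cbn [fst snd] in E1, E2.
  split; simpl; apply (Z.gauss _ o); try apply rel_prime_2pow; auto.
  exists (fst Y). lia. exists (snd Y). lia. Qed.

Lemma congr_div2n n x y : congr n x y <-> div2n n (x -' y).
Proof. unfold congr, div2n. destruct x, y. simpl. rewrite !Z.add_opp_r. tauto. Qed.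

Lemma congr_vge n x y : congr n x y <-> vge (x -' y) (2 * n).
Proof. rewrite congr_div2n. split; [apply div2n_vge|apply vge_div2n]. Qed.

Lemma Pb_pow x k : Pb x = false -> Pb (x ^' k) = false.
Proof. intro H. induction k. apply Pb_one. rewrite pow_S, Pb_mul, H, IHk. reflexivity. Qed.

Lemma Pb_pi_pow k : Pb (pi ^' S k) = true.
Proof. replace (pi ^' S k) with (pi ^' S k *' oneZD) by ring. apply Pb_pow_pos. Qed.

Lemma vge_shift_seq (V : nat -> ZD) (hV : forall n, congr n (V (S n)) (V n)) :
  forall n N, (n <= N)%nat -> vge (V N -' V n) (2 * n).
Proof. intros n N H. induction H.
  - replace (V n -' V n) with zeroZD by ring. apply vge_0.
  - replace (V (S m) -' V n) with ((V (S m) -' V m) +' (V m -' V n)) by ring.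
    apply vge_add; auto. apply (vge_mono _ (2 * m)). apply congr_vge, hV. lia. Qed.

Section Hensel.
Variable m : nat.
Hypothesis hm : Nat.odd m = true.
Local Notation d := (2 * m)%nat.

Lemma Pb_m : Pb (ofZ (Z.of_nat m)) = false.
Proof. rewrite Pb_ofZ. apply Nat.odd_spec in hm. destruct hm as [k Hk]. subst.
  rewrite Nat2Z.inj_add, Nat2Z.inj_mul. simpl Z.of_nat.
  rewrite Z.even_add, Z.even_mul. reflexivity. Qed.

Lemma lift A R z K (HK : (5 <= K)%nat) (HA : Pb A = false) (Hz : Pb z = false)
  (H : vge (A *' z ^' d +' R) K) (Hn : ~ vge (A *' z ^' d +' R) (S K)) :
  vge (A *' (z +' pi ^' (K - 2)) ^' d +' R) (S K).
Proof.
  assert (Hm0 : (d = S (d - 1))%nat). { destruct m. discriminate. lia. }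
  set (h := pi ^' (K - 2)).
  destruct (binom1 (d - 1) z h) as [P HP]. rewrite <- Hm0 in HP. rewrite HP.
  replace (A *' (z ^' d +' ofZ (Z.of_nat d) *' z ^' (d - 1) *' h +' h *' h *' P) +' R)
    with ((A *' z ^' d +' R) +' (A *' ofZ (Z.of_nat d) *' z ^' (d - 1) *' h) +' A *' (h *' h *' P))
    by ring.
  apply vge_add.
  - assert (V2 : val (A *' ofZ (Z.of_nat d) *' z ^' (d - 1) *' h) K).
    { replace (ofZ (Z.of_nat d)) with (ofZ 2 *' ofZ (Z.of_nat m))
        by (rewrite <- ofZ_mul; f_equal; lia).
      assert (V : val (A *' (ofZ 2 *' ofZ (Z.of_nat m)) *' z ^' (d - 1) *' h)
                      (0 + (2 + 0) + 0 + (K - 2))).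
      { apply val_mul; [apply val_mul; [apply val_mul|]|].
        apply val_unit; auto. apply val_mul. apply val_two. apply val_unit, Pb_m.
        apply val_unit, Pb_pow; auto. apply val_pi. }
      replace (0 + (2 + 0) + 0 + (K - 2))%nat with K in V by lia. exact V. }
    apply vge_sum_exact; auto. apply val_vge; auto. apply val_not; auto.
  - apply vge_mul_l. apply vge_mul_r. unfold h. rewrite <- pow_add. 
    apply (vge_mono _ (K - 2 + (K - 2))). replace (pi ^' (K - 2 + (K - 2))) with
      (pi ^' (K - 2 + (K - 2)) *' oneZD) by ring. apply vge_pi. lia.
Qed.

Variables U Sq : nat -> ZD.
Hypothesis hU : forall n, congr n (U (S n)) (U n).
Hypothesis hS : forall n, congr n (Sq (S n)) (Sq n).
Hypothesis hUu : forall n, (1 <= n)%nat -> Pb (U n) = false.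
Hypothesis h5 : vge (U 5 +' Sq 5) 5.

Definition FF n z := U n *' z ^' d +' Sq n.

Fixpoint ww (n : nat) : ZD :=
  match n with
  | O => oneZD
  | S n' => if Nat.ltb n' 5 then oneZD else
      if excluded_middle_informative (vge (FF (S n') (ww n')) (S n')) then ww n'
      else ww n' +' pi ^' (n' - 2)
  end.

Lemma FF_shift n v : (5 <= n)%nat -> vge (FF n v) n -> vge (FF (S n) v) n.
Proof. intros Hn H. replace (FF (S n) v) with
   (FF n v +' ((U (S n) -' U n) *' v ^' d +' (Sq (S n) -' Sq n))) by (unfold FF; ring).
  apply vge_add; auto. apply vge_add. apply vge_mul_r.
  apply (vge_mono _ (2 * n)). apply congr_vge, hU. lia.
  apply (vge_mono _ (2 * n)). apply congr_vge, hS. lia. Qed.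

Lemma ww_inv n : (5 <= n)%nat -> vge (FF n (ww n)) n /\ Pb (ww n) = false.
Proof. intro Hn. induction Hn.
  - simpl. unfold FF. rewrite pow_one. split. replace (U 5 *' oneZD +' Sq 5) with (U 5 +' Sq 5) by ring.
    auto. apply Pb_one.
  - destruct IHHn as [I1 I2]. simpl ww. replace (Nat.ltb m0 5) with false
      by (symmetry; apply Nat.ltb_ge; lia).
    destruct (excluded_middle_informative _) as [Hv|Hv].
    + auto.
    + split. apply lift; auto. apply hUu; lia. apply FF_shift; auto.
      rewrite Pb_add, I2. replace (m0 - 2)%nat with (S (m0 - 3)) by lia.
      rewrite Pb_pi_pow. reflexivity.
Qed.

Lemma ww_step n : (5 <= n)%nat -> vge (ww (S n) -' ww n) (n - 2).
Proof. intro Hn. simpl ww. replace (Nat.ltb n 5) with false by (symmetry; apply Nat.ltb_ge; lia).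
  destruct (excluded_middle_informative _).
  - replace (ww n -' ww n) with zeroZD by ring. apply vge_0.
  - replace (ww n +' pi ^' (n - 2) -' ww n) with (pi ^' (n - 2) *' oneZD) by ring. apply vge_pi.
Qed.

Lemma hensel : exists z : Oel, (forall n, Pb (oseq z n) = false) /\
  forall n, vge (FF n (oseq z n)) (2 * n).
Proof.
  assert (coh : forall n, congr n (ww (2 * S n + 5)) (ww (2 * n + 5))).
  { intro n. apply congr_vge. replace (2 * S n + 5)%nat with (S (S (2 * n + 5))) by lia.
    replace (ww (S (S (2 * n + 5))) -' ww (2 * n + 5)) with
      ((ww (S (S (2 * n + 5))) -' ww (S (2 * n + 5))) +' (ww (S (2 * n + 5)) -' ww (2 * n + 5)))
      by ring.
    apply vge_add; (eapply vge_mono; [apply ww_step|]); lia. }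
  exists (Build_Oel (fun n => ww (2 * n + 5)) coh). cbn [oseq]. split.
  - intro n. apply ww_inv. lia.
  - intro n. destruct (ww_inv (2 * n + 5)) as [I1 _]. lia.
    set (v := ww (2 * n + 5)) in *.
    replace (FF n v) with (FF (2 * n + 5) v +' ((U n -' U (2 * n + 5)) *' v ^' d +'
       (Sq n -' Sq (2 * n + 5)))) by (unfold FF; ring).
    apply vge_add. eapply vge_mono; [exact I1|lia].
    apply vge_add. apply vge_mul_r.
    replace (U n -' U (2 * n + 5)) with (oppZD (U (2 * n + 5) -' U n)) by (apply ZD_eq; unfold subZD, addZD, oppZD; cbn [fst snd]; ring).
    apply vge_opp, vge_shift_seq; auto; lia.
    replace (Sq n -' Sq (2 * n + 5)) with (oppZD (Sq (2 * n + 5) -' Sq n)) by (apply ZD_eq; unfold subZD, addZD, oppZD; cbn [fst snd]; ring).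
    apply vge_opp, vge_shift_seq; auto; lia.
Qed.

End Hensel.

Import ListNotations.
Ltac zlia := Z.div_mod_to_equations; lia.
Lemma PbD_Pb x : PbD D x = Pb x.
Proof. reflexivity. Qed.

Lemma quarter x : (4 | fst x) -> (4 | snd x) -> x = ofZ 2 ^' 2 *' (fst x / 4, snd x / 4).
Proof. rewrite <- (ofZ_pow 2 2). change (2 ^ Z.of_nat 2) with 4.
  destruct x as [x1 x2]; cbn [fst snd]; intros [a ->] [b ->].
  rewrite !Z_div_mult by zlia. apply ZD_eq; unfold mulZD, ofZ; cbn [fst snd]; ring. Qed.

Lemma vge5_char x : vge x 5 <-> div2n 2 x /\ Pb (fst x / 4, snd x / 4) = true.
Proof. split.
  - intro H. assert (H4 : div2n 2 x) by (apply vge_div2n; eapply vge_mono; [exact H|zlia]).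
    split; auto. destruct (Pb (fst x / 4, snd x / 4)) eqn:E; auto. exfalso.
    apply val_unit in E.
    assert (V : val (ofZ 2 ^' 2 *' (fst x / 4, snd x / 4)) ((2 + 2) + 0)).
    { apply val_mul; auto. simpl powZD.
      replace (ofZ 2 *' (ofZ 2 *' oneZD)) with (ofZ 2 *' ofZ 2) by ring.
      apply val_mul; apply val_two. }
    apply val_not in V. apply V. destruct H4 as [H1 H2]. change (2 ^ Z.of_nat 2) with 4 in *.
    rewrite <- quarter; auto.
  - intros [[H1 H2] HP]. apply Pb_vge1 in HP. change (2 ^ Z.of_nat 2) with 4 in *.
    rewrite (quarter x H1 H2).
    replace 5%nat with (2 * 2 + 1)%nat by zlia. apply vge_mulv; auto. apply vge_two_pow.
Qed.

Lemma even_mod2 z : Z.even z = true <-> z mod 2 = 0.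
Proof. rewrite Z.even_spec. split. intros [k ->]. zlia. intro H. exists (z / 2). zlia. Qed.

Lemma pair00 (X Y : Z) : (X, Y) = (0, 0) <-> X = 0 /\ Y = 0.
Proof. split. intro H. injection H. auto. intros [-> ->]. reflexivity. Qed.

Lemma evenb_div2n x : evenb x = true <-> div2n 1 x.
Proof. unfold evenb, div2n. change (2 ^ Z.of_nat 1) with 2. rewrite Bool.andb_true_iff, !even_mod2.
  rewrite <- !Z.mod_divide by zlia. tauto. Qed.

Lemma clE_zero x : evenb x = true -> (vge x 5 <-> clE D x = (0, 0)).
Proof. intro He. rewrite vge5_char. unfold evenb in He. rewrite Bool.andb_true_iff, !even_mod2 in He.
  unfold div2n, clE, cl, Pb. change (2 ^ Z.of_nat 2) with 4. destruct x as [a b]. cbn [fst snd] in *.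
  rewrite <- !Z.mod_divide by zlia. rewrite even_mod2.
  destruct (Z.odd D); rewrite pair00; split; intros; zlia.
Qed.

Lemma clE_add x y : evenb x = true -> evenb y = true -> clE D (x +' y) = addG (clE D x) (clE D y).
Proof. intros Hx Hy. unfold evenb in Hx, Hy. rewrite Bool.andb_true_iff, !even_mod2 in Hx, Hy.
  unfold clE, cl, addG, addZD. destruct x as [a b], y as [c e]. cbn [fst snd] in *.
  destruct (Z.odd D); apply ZD_eq; cbn [fst snd]; zlia.
Qed.

Definition red (x : ZD) : ZD := (fst x mod 8, snd x mod 8).

Lemma red_vge x : vge (x -' red x) 5.
Proof. eapply vge_mono; [apply (div2n_vge 3)|zlia]. unfold div2n. change (2 ^ Z.of_nat 3) with 8.
  destruct x as [a b]; unfold red, subZD, addZD, oppZD; cbn [fst snd].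
  split; [exists (a / 8)|exists (b / 8)]; zlia. Qed.

Lemma In_Z8 z : In (z mod 8) allZ8.
Proof. assert (H : 0 <= z mod 8 < 8) by (apply Z.mod_pos_bound; lia).
  unfold allZ8. destruct H as [H1 H2].
  assert (z mod 8 = 0 \/ z mod 8 = 1 \/ z mod 8 = 2 \/ z mod 8 = 3 \/ z mod 8 = 4 \/
          z mod 8 = 5 \/ z mod 8 = 6 \/ z mod 8 = 7) by lia.
  repeat destruct H as [H|H]; rewrite H; simpl; tauto. Qed.

Lemma In_P8 x : In (red x) allP8.
Proof. unfold allP8, red. apply in_prod; apply In_Z8. Qed.

Lemma even_congr X Y : (X - Y) mod 2 = 0 -> Z.even X = Z.even Y.
Proof. intro H. replace X with (Y + 2 * ((X - Y) / 2)) by zlia. apply even_shift. Qed.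

Lemma Pb_red u : Pb (red u) = Pb u.
Proof. unfold Pb, red. destruct u as [a b]; cbn [fst snd]. apply even_congr.
  destruct (Z.odd D); zlia. Qed.

Lemma constr_red u c : div2n 1 (u -' oneZD -' cpi D c) -> constr D c (red u) = true.
Proof. unfold div2n, constr, red. change (2 ^ Z.of_nat 1) with 2.
  destruct (cpi D c) as [p1 p2]. destruct u as [a b].
  unfold subZD, addZD, oppZD, oneZD; cbn [fst snd]. intros [[k1 H1] [k2 H2]].
  apply andb_true_intro; split; apply even_mod2; zlia. Qed.

Lemma units8_red u c : div2n 1 (u -' oneZD -' cpi D c) -> In (red u) (units8 D c).
Proof. intro H. unfold units8. apply filter_In. split. apply In_P8. apply constr_red; auto. Qed.

Lemma unitsAll_red u : Pb u = false -> In (red u) (unitsAll D).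
Proof. intro H. unfold unitsAll. apply filter_In. split. apply In_P8.
  rewrite PbD_Pb, Pb_red, H. reflexivity. Qed.

Lemma evenb_vge x : evenb x = true <-> vge x 2.
Proof. rewrite evenb_div2n. split; [apply (div2n_vge 1)|apply (vge_div2n 1)]. Qed.

Lemma pv_red_diff U1 U2 o : vge (pv D U1 U2 o -' pv D (red U1) (red U2) o) 5.
Proof. unfold pv. replace (U1 *' Mv D (fst (ysel o)) +' U2 *' Mv D (snd (ysel o)) -'
   (red U1 *' Mv D (fst (ysel o)) +' red U2 *' Mv D (snd (ysel o)))) with
   ((U1 -' red U1) *' Mv D (fst (ysel o)) +' (U2 -' red U2) *' Mv D (snd (ysel o))) by ring.
  apply vge_add; apply vge_mul_r; apply red_vge. Qed.

Lemma Fv_red_diff j U o : vge (Fv D j U o -' Fv D j (red U) o) 5.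
Proof. unfold Fv. replace (pi ^' j *' U *' Mv D o -' pi ^' j *' red U *' Mv D o) with
   ((U -' red U) *' (pi ^' j *' Mv D o)) by ring.
  apply vge_mul_r; apply red_vge. Qed.

Lemma pv0 U1 U2 : pv D U1 U2 0 = zeroZD.
Proof. unfold pv; simpl. unfold Mv. ring. Qed.
Lemma Fv0 j U : Fv D j U 0 = zeroZD.
Proof. unfold Fv; simpl. ring. Qed.

Lemma clE0 : clE D zeroZD = (0, 0).
Proof. unfold clE, cl; destruct (Z.odd D); reflexivity. Qed.

Lemma in5 o : In o [0;1;2;3;4]%nat -> o = 0%nat \/ o = 1%nat \/ o = 2%nat \/ o = 3%nat \/ o = 4%nat.
Proof. simpl. intuition. Qed.

Lemma pv_class R1 R2 o : In o [0;1;2;3;4]%nat ->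
  evenok D (true) = true \/ True ->
  gsel (prof D (R1, R2)) o = clE D (pv D R1 R2 o).
Proof. intros H _. apply in5 in H. repeat destruct H as [H|H]; subst; try reflexivity.
  simpl. rewrite pv0, clE0. reflexivity. Qed.

Lemma model (j : nat) (c c' : bool) (hj : In j [2;3;4]%nat) U1 U2 U3 U4 U5
  (h1 : div2n 1 (U1 -' oneZD -' cpi D c)) (h2 : div2n 1 (U2 -' oneZD -' cpi D c))
  (h3 : div2n 1 (U3 -' oneZD -' cpi D c')) (h4 : div2n 1 (U4 -' oneZD -' cpi D c'))
  (h5 : Pb U5 = false) :
  exists o1 o2 o5, (o1 <> 0 \/ o2 <> 0)%nat /\ (o1 <= 4)%nat /\ (o2 <= 4)%nat /\ (o5 <= 2)%nat /\
    vge (pv D U1 U2 o1 +' pv D U3 U4 o2 +' Fv D j U5 o5) 5.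
Proof.
  pose proof (check_all D hD) as chk. unfold check in chk.
  rewrite forallb_forall in chk. specialize (chk j hj).
  rewrite forallb_forall in chk. specialize (chk c ltac:(destruct c; simpl; auto)).
  apply andb_prop in chk. destruct chk as [chk C]. apply andb_prop in chk. destruct chk as [E1 E2].
  rewrite forallb_forall in C. specialize (C c' ltac:(destruct c'; simpl; auto)).
  pose proof (check_all D hD) as chk'. unfold check in chk'.
  rewrite forallb_forall in chk'. specialize (chk' j hj).
  rewrite forallb_forall in chk'. specialize (chk' c' ltac:(destruct c'; simpl; auto)).
  apply andb_prop in chk'. destruct chk' as [chk' _]. apply andb_prop in chk'. destruct chk' as [E1' _].
  set (R1 := red U1). set (R2 := red U2). set (R3 := red U3). set (R4 := red U4). set (R5 := red U5).
  assert (I12 : In (R1, R2) (list_prod (units8 D c) (units8 D c))) by (apply in_prod; apply units8_red; auto).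
  assert (I34 : In (R3, R4) (list_prod (units8 D c') (units8 D c'))) by (apply in_prod; apply units8_red; auto).
  assert (I5 : In R5 (unitsAll D)) by (apply unitsAll_red; auto).
  unfold comb_ok in C. cbv zeta in C. rewrite forallb_forall in C.
  specialize (C (prof D (R1, R2))). 
  assert (P1 : In (prof D (R1, R2)) (profiles D c)) by (apply nodup_In, in_map; auto).
  specialize (C P1). rewrite forallb_forall in C.
  assert (P2 : In (prof D (R3, R4)) (profiles D c')) by (apply nodup_In, in_map; auto).
  specialize (C _ P2). rewrite forallb_forall in C.
  assert (P5 : In (fprof D j R5) (fprofiles D j)) by (apply nodup_In, in_map; auto).
  specialize (C _ P5). apply existsb_exists in C. destruct C as [[[o1 o2] o5] [Io Ho]].
  unfold opts in Io. apply in_prod_iff in Io. destruct Io as [Io Io5]. apply in_prod_iff in Io.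
  destruct Io as [Io1 Io2].
  unfold okopt in Ho. apply andb_prop in Ho. destruct Ho as [Hnz Hs].
  exists o1, o2, o5.
  assert (B1 := in5 o1 Io1). assert (B2 := in5 o2 Io2).
  assert (B5 : o5 = 0%nat \/ o5 = 1%nat \/ o5 = 2%nat) by (simpl in Io5; intuition).
  split. destruct o1, o2; simpl in Hnz; try discriminate; lia. split. lia. split. lia. split. lia.
  assert (Ev1 : evenb (pv D R1 R2 o1) = true).
  { destruct B1 as [->|B1]. rewrite pv0; reflexivity.
    unfold evenok in E1. rewrite forallb_forall in E1. specialize (E1 _ I12).
    rewrite forallb_forall in E1. apply E1. simpl. lia. }
  assert (Ev2 : evenb (pv D R3 R4 o2) = true).
  { destruct B2 as [->|B2]. rewrite pv0; reflexivity.
    unfold evenok in E1'. rewrite forallb_forall in E1'. specialize (E1' _ I34).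
    rewrite forallb_forall in E1'. apply E1'. simpl. lia. }
  assert (Ev5 : evenb (Fv D j R5 o5) = true).
  { destruct B5 as [->|B5]. rewrite Fv0; reflexivity.
    unfold evenF in E2. rewrite forallb_forall in E2. specialize (E2 _ I5).
    rewrite forallb_forall in E2. apply E2. simpl. lia. }
  assert (Hred : vge (pv D R1 R2 o1 +' pv D R3 R4 o2 +' Fv D j R5 o5) 5).
  { apply clE_zero. apply evenb_vge. apply evenb_vge in Ev1, Ev2, Ev5.
    apply vge_add; [apply vge_add|]; auto.
    rewrite !clE_add; auto. 2: apply evenb_vge; apply vge_add; apply evenb_vge; auto.
    unfold pzeqb in Hs. apply andb_prop in Hs. destruct Hs as [Hs1 Hs2].
    apply Z.eqb_eq in Hs1, Hs2.
    rewrite <- (pv_class R1 R2 o1), <- (pv_class R3 R4 o2); auto.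
    replace (clE D (Fv D j R5 o5)) with (gsel (fprof D j R5) o5).
    destruct (addG _ _); simpl in *; subst; reflexivity.
    destruct B5 as [->|[->| ->]]; try reflexivity. simpl. rewrite Fv0, clE0. reflexivity. }
  replace (pv D U1 U2 o1 +' pv D U3 U4 o2 +' Fv D j U5 o5) with
    ((pv D R1 R2 o1 +' pv D R3 R4 o2 +' Fv D j R5 o5) +'
     ((pv D U1 U2 o1 -' pv D R1 R2 o1) +' (pv D U3 U4 o2 -' pv D R3 R4 o2) +'
      (Fv D j U5 o5 -' Fv D j R5 o5))) by ring.
  apply vge_add; auto. apply vge_add; [apply vge_add; apply pv_red_diff|apply Fv_red_diff].
Qed.

Lemma y0_pow4 : vge (y0 D ^' 4 -' oneZD) 5.
Proof. rewrite vge5_char. unfold div2n. change (2 ^ Z.of_nat 2) with 4.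
  rewrite <- !Z.mod_divide by lia. unfold Pb, y0, subZD, addZD, oppZD, oneZD.
  destruct hD as [->|[->|[->|[->|[->| ->]]]]]; vm_compute; auto. Qed.

Lemma vge_pow_one x k K : vge (x -' oneZD) K -> vge (x ^' k -' oneZD) K.
Proof. intro H. induction k. simpl. replace (oneZD -' oneZD) with zeroZD by ring. apply vge_0.
  replace (x ^' S k -' oneZD) with (x *' (x ^' k -' oneZD) +' (x -' oneZD)) by (simpl; ring).
  apply vge_add; auto. apply vge_mul_l; auto. Qed.

Section M.
Variable m : nat.
Hypothesis hm : Nat.odd m = true.
Local Notation d := (2 * m)%nat.

Lemma y0_powd : vge (y0 D ^' d -' qq D) 5.
Proof. apply Nat.odd_spec in hm. destruct hm as [k Hk]. subst m.
  replace (2 * (2 * k + 1))%nat with (4 * k + 2)%nat by lia.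
  rewrite pow_add, <- pow_pow.
  replace (qq D) with (y0 D ^' 2) by (unfold qq; simpl; ring).
  replace ((y0 D ^' 4) ^' k *' y0 D ^' 2 -' y0 D ^' 2) with
    (((y0 D ^' 4) ^' k -' oneZD) *' y0 D ^' 2) by ring.
  apply vge_mul_r, vge_pow_one, y0_pow4. Qed.

Definition yv (code : nat) : ZD :=
  match code with O => zeroZD | 1%nat => oneZD | _ => y0 D end.

Lemma yv_Mv code : vge (yv code ^' d -' Mv D code) 5.
Proof. destruct code as [|[|code]]; simpl yv; simpl Mv.
  - destruct m as [|m']. discriminate. replace (2 * S m')%nat with (S (2 * m' + 1)) by lia.
    replace (zeroZD ^' S (2 * m' + 1) -' zeroZD) with zeroZD by (simpl; ring). apply vge_0.
  - rewrite pow_one. replace (oneZD -' oneZD) with zeroZD by ring. apply vge_0.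
  - apply y0_powd. Qed.

Lemma Pb_yv code : code <> 0%nat -> Pb (yv code) = false.
Proof. intro H. destruct code as [|[|code]]. contradiction. apply Pb_one.
  simpl. unfold y0. rewrite Pb_add, Pb_one, Pb_pi. reflexivity. Qed.

End M.

Lemma Pb_sub x y : Pb (x -' y) = Bool.eqb (Pb x) (Pb y).
Proof. unfold subZD. rewrite Pb_add. replace (oppZD y) with (ofZ (-1) *' y)
  by (apply ZD_eq; unfold ofZ, mulZD, oppZD; cbn [fst snd]; ring).
  rewrite Pb_mul, Pb_ofZ. reflexivity. Qed.

Lemma cpi_Pb c : Pb (cpi D c) = true.
Proof. unfold cpi. rewrite Pb_mul, Pb_pi. destruct (Pb _); reflexivity. Qed.

Lemma unpack (d : nat) (a : Oel) (l : nat) (c : bool) : level_coef D d a l c ->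
  exists r (u : Oel), Nat.modulo r d = Nat.modulo l d /\
    eqS (oseq a) (fun n => pi ^' r *' oseq u n) /\
    (forall n, (1 <= n)%nat -> div2n 1 (oseq u n -' oneZD -' cpi D c)) /\
    (forall n, (1 <= n)%nat -> Pb (oseq u n) = false).
Proof. intros [r [[u [_ [Ha [w Hw]]]] Hr]]. exists r, u. split; auto. split; auto.
  assert (H1 : forall n, (1 <= n)%nat -> div2n 1 (oseq u n -' oneZD -' cpi D c)).
  { intros n Hn. apply vge_div2n. specialize (Hw n). apply congr_vge in Hw.
    replace (oseq u n -' oneZD -' cpi D c) with
      ((oseq u n -' (oneZD +' mulZD D (ofZ (if c then 1 else 0)) pi +' pi ^' 2 *' oseq w n))
       +' pi ^' 2 *' oseq w n) by (unfold cpi; ring).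
    apply vge_add. eapply vge_mono; [exact Hw|lia]. apply vge_pi. }
  split; auto. intros n Hn. specialize (H1 n Hn). apply div2n_vge in H1. apply (vge_mono _ _ 1) in H1; [|lia]. apply vge1_Pb in H1.
  replace (oseq u n) with ((oseq u n -' oneZD -' cpi D c) +' oneZD +' cpi D c) by ring.
  rewrite Pb_add, Pb_add, H1, Pb_one, cpi_Pb. reflexivity. Qed.

Lemma val_unique (r r' : nat) (u u' : nat -> ZD)
  (H : forall n, congr n (pi ^' r *' u n) (pi ^' r' *' u' n))
  (hu : forall n, (1 <= n)%nat -> Pb (u n) = false)
  (hu' : forall n, (1 <= n)%nat -> Pb (u' n) = false) : r = r'.
Proof.
  assert (G : forall r r' (u u' : nat -> ZD), (r < r')%nat ->
    (forall n, congr n (pi ^' r *' u n) (pi ^' r' *' u' n)) ->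
    (forall n, (1 <= n)%nat -> Pb (u n) = false) -> False).
  { clear H hu hu' r r' u u'. intros r r' u u' Hlt H hu. specialize (H (S r)). apply congr_vge in H.
    assert (V : val (pi ^' r *' (u (S r) -' pi ^' (r' - r) *' u' (S r))) (r + 0)).
    { apply val_mul. apply val_pi. apply val_unit.
      replace (r' - r)%nat with (S (r' - r - 1)) by lia.
      rewrite Pb_sub, Pb_mul, Pb_pi_pow, hu by lia. reflexivity. }
    apply val_not in V. apply V. rewrite Nat.add_0_r.
    replace (pi ^' r *' (u (S r) -' pi ^' (r' - r) *' u' (S r))) with
      (pi ^' r *' u (S r) -' pi ^' r' *' u' (S r)).
    eapply vge_mono; [exact H|lia].
    replace (pi ^' r') with (pi ^' r *' pi ^' (r' - r)) by (rewrite <- pow_add; f_equal; lia).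
    ring. }
  destruct (Nat.lt_total r r') as [Hl|[He|Hl]]; auto.
  - exfalso. eapply G; eauto.
  - exfalso. eapply (G r' r u' u); eauto. intro n. specialize (H n).
    apply congr_vge in H. apply congr_vge.
    replace (pi ^' r' *' u' n -' pi ^' r *' u n) with (oppZD (pi ^' r *' u n -' pi ^' r' *' u' n))
      by (apply ZD_eq; unfold subZD, addZD, oppZD; cbn [fst snd]; ring).
    apply vge_opp; auto.
Qed.

Definition constO (c : ZD) : Oel.
Proof. refine (Build_Oel (fun _ => c) _). intro n. apply congr_vge.
  replace (c -' c) with zeroZD by ring. apply vge_0. Defined.

Definition scaleO (c : ZD) (x : Oel) : Oel.
Proof. refine (Build_Oel (fun n => c *' oseq x n) _). intro n. apply congr_vge.
  replace (c *' oseq x (S n) -' c *' oseq x n) with (c *' (oseq x (S n) -' oseq x n)) by ring.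
  apply vge_mul_l. apply congr_vge, ocoh. Defined.

Definition sumL (l : list nat) (F : nat -> ZD) : ZD :=
  fold_right (fun i acc => addZD (F i) acc) zeroZD l.

Lemma sumL_ext l F G : (forall i, F i = G i) -> sumL l F = sumL l G.
Proof. intro H. induction l; simpl; auto. rewrite H, IHl. reflexivity. Qed.

Lemma sumL_add l F G : sumL l (fun i => F i +' G i) = sumL l F +' sumL l G.
Proof. induction l; simpl. ring. rewrite IHl. ring. Qed.

Lemma sumL_zero l p v : ~ In p l -> sumL l (fun i => if Nat.eqb i p then v else zeroZD) = zeroZD.
Proof. induction l; simpl; intro H; auto. destruct (Nat.eqb a p) eqn:E.
  apply Nat.eqb_eq in E. subst. tauto. rewrite IHl by tauto. ring. Qed.

Lemma sumL_ind l p v : NoDup l -> In p l -> sumL l (fun i => if Nat.eqb i p then v else zeroZD) = v.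
Proof. induction l; simpl; intros Hn Hi. contradiction. inversion Hn; subst.
  destruct (Nat.eqb a p) eqn:E.
  - apply Nat.eqb_eq in E. subst. rewrite sumL_zero by auto. ring.
  - destruct Hi as [Hi|Hi]. subst. rewrite Nat.eqb_refl in E. discriminate.
    rewrite IHl by auto. ring. Qed.

Lemma sum_pick5 s (F : nat -> ZD) p1 p2 p3 p4 p5
  (h1 : (p1 < s)%nat) (h2 : (p2 < s)%nat) (h3 : (p3 < s)%nat) (h4 : (p4 < s)%nat) (h5 : (p5 < s)%nat)
  (d12 : p1 <> p2) (d13 : p1 <> p3) (d14 : p1 <> p4) (d15 : p1 <> p5) (d23 : p2 <> p3)
  (d24 : p2 <> p4) (d25 : p2 <> p5) (d34 : p3 <> p4) (d35 : p3 <> p5) (d45 : p4 <> p5)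
  (hF : forall i, i <> p1 -> i <> p2 -> i <> p3 -> i <> p4 -> i <> p5 -> F i = zeroZD) :
  sumZD s F = F p1 +' F p2 +' F p3 +' F p4 +' F p5.
Proof.
  change (sumZD s F) with (sumL (List.seq 0 s) F).
  set (G := fun p i => if Nat.eqb i p then F p else zeroZD).
  rewrite (sumL_ext _ F (fun i => G p1 i +' G p2 i +' G p3 i +' G p4 i +' G p5 i)).
  - rewrite !sumL_add. unfold G. rewrite !sumL_ind; try apply seq_NoDup;
      try (apply in_seq; lia). reflexivity.
  - intro i. unfold G.
    repeat match goal with |- context [Nat.eqb ?x ?y] => destruct (Nat.eqb_spec x y) end;
    subst; try congruence; try ring. rewrite hF by auto. ring.
Qed.

Lemma modeq_exact (a b d : nat) : (0 < d)%nat -> Nat.modulo a d = Nat.modulo b d -> (a <= b)%nat ->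
  (a + d * ((b - a) / d) = b)%nat.
Proof. intros Hd Hm Hab.
  pose proof (Nat.div_mod_eq a d) as Ea. pose proof (Nat.div_mod_eq b d) as Eb.
  assert (a / d <= b / d)%nat by (apply Nat.Div0.div_le_mono; lia).
  assert (E : (b - a = d * (b / d - a / d))%nat) by nia.
  rewrite E, (Nat.mul_comm d (b / d - a / d)), Nat.div_mul by lia. nia. Qed.

Lemma maxl0 s : maxl s (fun _ => 0%nat) = 0%nat.
Proof. induction s; simpl; [reflexivity|]. rewrite IHs. reflexivity. Qed.

Lemma le_dmul (y dd : nat) : (0 < dd)%nat -> (y <= dd * y)%nat.
Proof. intros. nia. Qed.

Section Core.
Variable m : nat.
Hypothesis hm : Nat.odd m = true.
Local Notation d := (2 * m)%nat.

Lemma term_id r tt u y w : pi ^' r *' u *' (pi ^' tt *' y *' w) ^' d =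
  pi ^' (r + d * tt) *' u *' y ^' d *' w ^' d.
Proof. rewrite !pow_mul, pow_pow, pow_add, (Nat.mul_comm tt d). ring. Qed.

Lemma coh_const (x : Oel) (c : ZD) n : vge (oseq x (S n) *' c -' oseq x n *' c) (2 * n).
Proof. replace (oseq x (S n) *' c -' oseq x n *' c) with ((oseq x (S n) -' oseq x n) *' c) by ring.
  apply vge_mul_r, congr_vge, ocoh. Qed.

Lemma core (s : nat) (a : nat -> Oel) (p1 p2 p3 p4 p5 : nat)
  (h1 : (p1 < s)%nat) (h2 : (p2 < s)%nat) (h3 : (p3 < s)%nat) (h4 : (p4 < s)%nat) (h5 : (p5 < s)%nat)
  (d12 : p1 <> p2) (d13 : p1 <> p3) (d14 : p1 <> p4) (d15 : p1 <> p5) (d23 : p2 <> p3)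
  (d24 : p2 <> p4) (d25 : p2 <> p5) (d34 : p3 <> p4) (d35 : p3 <> p5) (d45 : p4 <> p5)
  (r1 r2 r3 r4 r5 : nat) (u1 u2 u3 u4 u5 : Oel) (k jj : nat) (hjj : In jj [2;3;4]%nat)
  (ha1 : eqS (oseq (a p1)) (fun n => pi ^' r1 *' oseq u1 n))
  (ha2 : eqS (oseq (a p2)) (fun n => pi ^' r2 *' oseq u2 n))
  (ha3 : eqS (oseq (a p3)) (fun n => pi ^' r3 *' oseq u3 n))
  (ha4 : eqS (oseq (a p4)) (fun n => pi ^' r4 *' oseq u4 n))
  (ha5 : eqS (oseq (a p5)) (fun n => pi ^' r5 *' oseq u5 n))
  (hu1 : forall n, (1 <= n)%nat -> Pb (oseq u1 n) = false)
  (hr1 : Nat.modulo r1 d = Nat.modulo k d) (hr2 : Nat.modulo r2 d = Nat.modulo k d)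
  (hr3 : Nat.modulo r3 d = Nat.modulo k d) (hr4 : Nat.modulo r4 d = Nat.modulo k d)
  (hr5 : Nat.modulo r5 d = Nat.modulo (k + jj) d)
  (o1 o2 o5 : nat) (ho1 : o1 <> 0%nat) (ho1' : (o1 <= 4)%nat)
  (hv : vge (pv D (oseq u1 5) (oseq u2 5) o1 +' pv D (oseq u3 5) (oseq u4 5) o2 +'
             Fv D jj (oseq u5 5) o5) 5) :
  has_nontrivial_zero_K D d s a.
Proof.
  assert (Hm1 : (1 <= m)%nat) by (destruct m; [discriminate|lia]).
  set (Y1 := fst (ysel o1)). set (Y2 := snd (ysel o1)).
  set (Y3 := fst (ysel o2)). set (Y4 := snd (ysel o2)).
  assert (HY1 : Pb (yv Y1) = false).
  { apply Pb_yv. unfold Y1. destruct o1 as [|[|[|[|[|]]]]]; simpl; lia. }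
  set (U := fun n => oseq u1 n *' yv Y1 ^' d).
  set (Sq := fun n => oseq u2 n *' yv Y2 ^' d +' oseq u3 n *' yv Y3 ^' d +'
                      oseq u4 n *' yv Y4 ^' d +' pi ^' jj *' oseq u5 n *' yv o5 ^' d).
  assert (hU : forall n, congr n (U (S n)) (U n)).
  { intro n. apply congr_vge. apply coh_const. }
  assert (hS : forall n, congr n (Sq (S n)) (Sq n)).
  { intro n. apply congr_vge. unfold Sq.
    replace (oseq u2 (S n) *' yv Y2 ^' d +' oseq u3 (S n) *' yv Y3 ^' d +'
      oseq u4 (S n) *' yv Y4 ^' d +' pi ^' jj *' oseq u5 (S n) *' yv o5 ^' d -'
      (oseq u2 n *' yv Y2 ^' d +' oseq u3 n *' yv Y3 ^' d +' oseq u4 n *' yv Y4 ^' d +'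
       pi ^' jj *' oseq u5 n *' yv o5 ^' d)) with
     ((oseq u2 (S n) *' yv Y2 ^' d -' oseq u2 n *' yv Y2 ^' d) +'
      (oseq u3 (S n) *' yv Y3 ^' d -' oseq u3 n *' yv Y3 ^' d) +'
      (oseq u4 (S n) *' yv Y4 ^' d -' oseq u4 n *' yv Y4 ^' d) +'
      (pi ^' jj *' (oseq u5 (S n) *' yv o5 ^' d -' oseq u5 n *' yv o5 ^' d))) by ring.
    apply vge_add; [apply vge_add; [apply vge_add|]|]; try apply coh_const.
    apply vge_mul_l, coh_const. }
  assert (hUu : forall n, (1 <= n)%nat -> Pb (U n) = false).
  { intros n Hn. unfold U. rewrite Pb_mul, hu1, Pb_pow; auto. }
  assert (h5' : vge (U 5%nat +' Sq 5%nat) 5).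
  { unfold U, Sq. unfold pv, Fv in hv. fold Y1 Y2 Y3 Y4 in hv.
    replace (oseq u1 5 *' yv Y1 ^' d +' (oseq u2 5 *' yv Y2 ^' d +' oseq u3 5 *' yv Y3 ^' d +'
      oseq u4 5 *' yv Y4 ^' d +' pi ^' jj *' oseq u5 5 *' yv o5 ^' d)) with
     ((oseq u1 5 *' Mv D Y1 +' oseq u2 5 *' Mv D Y2 +'
       (oseq u3 5 *' Mv D Y3 +' oseq u4 5 *' Mv D Y4) +'
       pi ^' jj *' oseq u5 5 *' Mv D o5) +'
      (oseq u1 5 *' (yv Y1 ^' d -' Mv D Y1) +' oseq u2 5 *' (yv Y2 ^' d -' Mv D Y2) +'
       oseq u3 5 *' (yv Y3 ^' d -' Mv D Y3) +' oseq u4 5 *' (yv Y4 ^' d -' Mv D Y4) +'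
       pi ^' jj *' oseq u5 5 *' (yv o5 ^' d -' Mv D o5))) by ring.
    apply vge_add; auto.
    apply vge_add; [apply vge_add; [apply vge_add; [apply vge_add|]|]|];
      apply vge_mul_l; apply yv_Mv; auto. }
  destruct (hensel m hm U Sq hU hS hUu h5') as [z [Hz Hzeq]].
  assert (Hd : (0 < d)%nat) by lia.
  set (E := (r1 + d * (r2 + r3 + r4 + r5 + 1))%nat).
  assert (HE : Nat.modulo E d = Nat.modulo k d).
  { unfold E. rewrite Nat.mul_comm, Nat.Div0.mod_add. auto. }
  assert (HEj : Nat.modulo (E + jj) d = Nat.modulo (k + jj) d).
  { rewrite Nat.Div0.add_mod, HE, <- Nat.Div0.add_mod. reflexivity. }
  assert (HS : (r2 + r3 + r4 + r5 + 1 <= d * (r2 + r3 + r4 + r5 + 1))%nat) by (apply le_dmul; lia).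
  assert (T1 := modeq_exact r1 E d Hd ltac:(congruence) ltac:(unfold E; clear - HS; lia)).
  assert (T2 := modeq_exact r2 E d Hd ltac:(congruence) ltac:(unfold E; clear - HS; lia)).
  assert (T3 := modeq_exact r3 E d Hd ltac:(congruence) ltac:(unfold E; clear - HS; lia)).
  assert (T4 := modeq_exact r4 E d Hd ltac:(congruence) ltac:(unfold E; clear - HS; lia)).
  assert (T5 := modeq_exact r5 (E + jj) d Hd ltac:(congruence) ltac:(unfold E; clear - HS; lia)).
  set (t1 := ((E - r1) / d)%nat) in *. set (t2 := ((E - r2) / d)%nat) in *.
  set (t3 := ((E - r3) / d)%nat) in *. set (t4 := ((E - r4) / d)%nat) in *.
  set (t5 := ((E + jj - r5) / d)%nat) in *.
  set (X1 := scaleO (pi ^' t1 *' yv Y1) z).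
  set (X2 := constO (pi ^' t2 *' yv Y2)). set (X3 := constO (pi ^' t3 *' yv Y3)).
  set (X4 := constO (pi ^' t4 *' yv Y4)). set (X5 := constO (pi ^' t5 *' yv o5)).
  set (x := fun i => if Nat.eqb i p1 then X1 else if Nat.eqb i p2 then X2 else
             if Nat.eqb i p3 then X3 else if Nat.eqb i p4 then X4 else
             if Nat.eqb i p5 then X5 else constO zeroZD).
  assert (x1 : x p1 = X1) by (unfold x; rewrite Nat.eqb_refl; reflexivity).
  assert (x2 : x p2 = X2) by (unfold x; rewrite Nat.eqb_refl;
    repeat (rewrite (proj2 (Nat.eqb_neq _ _)) by auto); reflexivity).
  assert (x3 : x p3 = X3) by (unfold x; rewrite Nat.eqb_refl;
    repeat (rewrite (proj2 (Nat.eqb_neq _ _)) by auto); reflexivity).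
  assert (x4 : x p4 = X4) by (unfold x; rewrite Nat.eqb_refl;
    repeat (rewrite (proj2 (Nat.eqb_neq _ _)) by auto); reflexivity).
  assert (x5 : x p5 = X5) by (unfold x; rewrite Nat.eqb_refl;
    repeat (rewrite (proj2 (Nat.eqb_neq _ _)) by auto); reflexivity).
  exists x, (fun _ => 0%nat). split.
  - exists p1. split; auto. rewrite x1. intro H0. specialize (H0 (S t1)).
    apply congr_vge in H0. unfold X1 in H0. cbn [oseq scaleO] in H0.
    assert (V : val (pi ^' t1 *' (yv Y1 *' oseq z (S t1))) (t1 + 0)).
    { apply val_mul. apply val_pi. apply val_unit. rewrite Pb_mul, HY1, Hz. reflexivity. }
    apply val_not in V. apply V. rewrite Nat.add_0_r.
    replace (pi ^' t1 *' (yv Y1 *' oseq z (S t1))) with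
      (pi ^' t1 *' yv Y1 *' oseq z (S t1) -' zeroZD) by ring.
    eapply vge_mono; [exact H0|lia].
  - intro n. rewrite maxl0. apply congr_vge.
    change (sumZD s ?F) with (sumL (List.seq 0 s) F).
    rewrite (sumL_ext _ _ (fun i => oseq (a i) n *' oseq (x i) n ^' d)).
    2:{ intro i. rewrite Nat.sub_diag. simpl Nat.mul. simpl Z.of_nat. change (2 ^ 0) with 1.
        rewrite ofZ_1. ring. }
    change (sumL (List.seq 0 s) ?F) with (sumZD s F).
    rewrite (sum_pick5 s _ p1 p2 p3 p4 p5); try assumption.
    2:{ intros i n1 n2 n3 n4 n5. unfold x.
        rewrite (proj2 (Nat.eqb_neq i p1) n1), (proj2 (Nat.eqb_neq i p2) n2),
          (proj2 (Nat.eqb_neq i p3) n3), (proj2 (Nat.eqb_neq i p4) n4), (proj2 (Nat.eqb_neq i p5) n5).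
        cbn [oseq constO]. replace d with (S (d - 1)) by (clear - Hm1; lia). rewrite pow_S. ring. }
    rewrite x1, x2, x3, x4, x5. unfold X1, X2, X3, X4, X5. cbn [oseq scaleO constO].
    specialize (Hzeq n). unfold FF, U, Sq in Hzeq.
    set (zn := oseq z n) in *.
    assert (G : forall (A : Oel) r (u : Oel) tt y w,
      eqS (oseq A) (fun n => pi ^' r *' oseq u n) ->
      vge (oseq A n *' (pi ^' tt *' y *' w) ^' d -'
           pi ^' (r + d * tt) *' oseq u n *' y ^' d *' w ^' d) (2 * n)).
    { intros A r u tt y w HA. rewrite <- term_id.
      replace (oseq A n *' (pi ^' tt *' y *' w) ^' d -' pi ^' r *' oseq u n *' (pi ^' tt *' y *' w) ^' d)
        with ((oseq A n -' pi ^' r *' oseq u n) *' (pi ^' tt *' y *' w) ^' d) by ring.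
      apply vge_mul_r. apply congr_vge, HA. }
    pose proof (G _ _ _ t1 (yv Y1) zn ha1) as G1.
    pose proof (G _ _ _ t2 (yv Y2) oneZD ha2) as G2.
    pose proof (G _ _ _ t3 (yv Y3) oneZD ha3) as G3.
    pose proof (G _ _ _ t4 (yv Y4) oneZD ha4) as G4.
    pose proof (G _ _ _ t5 (yv o5) oneZD ha5) as G5.
    rewrite T1 in G1. rewrite T2 in G2. rewrite T3 in G3. rewrite T4 in G4. rewrite T5 in G5.
    rewrite pow_one in G2, G3, G4, G5.
    replace (pi ^' t2 *' yv Y2) with (pi ^' t2 *' yv Y2 *' oneZD) by ring.
    replace (pi ^' t3 *' yv Y3) with (pi ^' t3 *' yv Y3 *' oneZD) by ring.
    replace (pi ^' t4 *' yv Y4) with (pi ^' t4 *' yv Y4 *' oneZD) by ring.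
    replace (pi ^' t5 *' yv o5) with (pi ^' t5 *' yv o5 *' oneZD) by ring.
    match goal with |- vge (?S -' zeroZD) _ => set (SS := S) end.
    assert (HP : vge (pi ^' E *' (oseq u1 n *' yv Y1 ^' d *' zn ^' d +'
        (oseq u2 n *' yv Y2 ^' d +' oseq u3 n *' yv Y3 ^' d +' oseq u4 n *' yv Y4 ^' d +'
         pi ^' jj *' oseq u5 n *' yv o5 ^' d))) (2 * n)).
    { apply vge_mul_l. exact Hzeq. }
    rewrite pow_add in G5.
    replace (SS -' zeroZD) with
      ((oseq (a p1) n *' (pi ^' t1 *' yv Y1 *' zn) ^' d -' pi ^' E *' oseq u1 n *' yv Y1 ^' d *' zn ^' d) +'
       (oseq (a p2) n *' (pi ^' t2 *' yv Y2 *' oneZD) ^' d -' pi ^' E *' oseq u2 n *' yv Y2 ^' d *' oneZD) +'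
       (oseq (a p3) n *' (pi ^' t3 *' yv Y3 *' oneZD) ^' d -' pi ^' E *' oseq u3 n *' yv Y3 ^' d *' oneZD) +'
       (oseq (a p4) n *' (pi ^' t4 *' yv Y4 *' oneZD) ^' d -' pi ^' E *' oseq u4 n *' yv Y4 ^' d *' oneZD) +'
       (oseq (a p5) n *' (pi ^' t5 *' yv o5 *' oneZD) ^' d -' pi ^' E *' pi ^' jj *' oseq u5 n *' yv o5 ^' d *' oneZD) +'
       pi ^' E *' (oseq u1 n *' yv Y1 ^' d *' zn ^' d +'
        (oseq u2 n *' yv Y2 ^' d +' oseq u3 n *' yv Y3 ^' d +' oseq u4 n *' yv Y4 ^' d +'
         pi ^' jj *' oseq u5 n *' yv o5 ^' d))) by (unfold SS; ring).
    apply vge_add; [|exact HP]. apply vge_add; [|exact G5]. apply vge_add; [|exact G4].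
    apply vge_add; [|exact G3]. apply vge_add; [exact G1|exact G2].
Qed.

End Core.

Lemma mod_shift_ne k jj dd : (0 < jj < dd)%nat -> Nat.modulo k dd <> Nat.modulo (k + jj) dd.
Proof. intros Hj He. pose proof (modeq_exact k (k + jj) dd ltac:(lia) He ltac:(lia)) as E.
  replace (k + jj - k)%nat with jj in E by lia.
  destruct (jj / dd)%nat as [|t]; nia. Qed.

Lemma congr_eqS_trans (A : Oel) (x y : nat -> ZD) :
  eqS (oseq A) x -> eqS (oseq A) y -> forall n, congr n (x n) (y n).
Proof. intros Hx Hy n. specialize (Hx n). specialize (Hy n). apply congr_vge in Hx, Hy.
  apply congr_vge. replace (x n -' y n) with ((oseq A n -' y n) -' (oseq A n -' x n)) by ring.
  apply vge_sub; auto. Qed.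

Lemma main_D (m d s : nat) (hm : Nat.odd m = true) (hm3 : (3 <= m)%nat) (hd : d = (2 * m)%nat)
  (a : nat -> Oel) (k : nat)
  (hpairs : exists i1 i2 i3 i4 : nat, exists c c' : bool,
      (i1 < s)%nat /\ (i2 < s)%nat /\ (i3 < s)%nat /\ (i4 < s)%nat /\
      i1 <> i2 /\ i1 <> i3 /\ i1 <> i4 /\ i2 <> i3 /\ i2 <> i4 /\ i3 <> i4 /\
      level_coef D d (a i1) k c /\ level_coef D d (a i2) k c /\
      level_coef D d (a i3) k c' /\ level_coef D d (a i4) k c')
  (hnext : exists j : nat, (j < s)%nat /\
      (at_level D d (a j) (k + 2) \/ at_level D d (a j) (k + 3) \/
       at_level D d (a j) (k + 4))) :
  has_nontrivial_zero_K D d s a.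
Proof.
  subst d.
  destruct hpairs as [i1 [i2 [i3 [i4 [c [c' [H1 [H2 [H3 [H4 [n12 [n13 [n14 [n23 [n24 [n34
    [L1 [L2 [L3 L4]]]]]]]]]]]]]]]]]]].
  destruct hnext as [i5 [H5 Hl]].
  assert (J : exists jj c5, In jj [2;3;4]%nat /\ level_coef D (2 * m) (a i5) (k + jj) c5).
  { destruct Hl as [[c5 Hc]|[[c5 Hc]|[c5 Hc]]].
    exists 2%nat, c5; split; [simpl; tauto|exact Hc].
    exists 3%nat, c5; split; [simpl; tauto|exact Hc].
    exists 4%nat, c5; split; [simpl; tauto|exact Hc]. }
  destruct J as [jj [c5 [Hjj L5]]].
  destruct (unpack _ _ _ _ L1) as [r1 [u1 [Hr1 [Ha1 [Hc1 Hp1]]]]].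
  destruct (unpack _ _ _ _ L2) as [r2 [u2 [Hr2 [Ha2 [Hc2 Hp2]]]]].
  destruct (unpack _ _ _ _ L3) as [r3 [u3 [Hr3 [Ha3 [Hc3 Hp3]]]]].
  destruct (unpack _ _ _ _ L4) as [r4 [u4 [Hr4 [Ha4 [Hc4 Hp4]]]]].
  destruct (unpack _ _ _ _ L5) as [r5 [u5 [Hr5 [Ha5 [Hc5 Hp5]]]]].
  assert (Hjj' : (0 < jj < 2 * m)%nat) by (simpl in Hjj; lia).
  assert (Dist : forall i r (u : Oel), i = i5 -> eqS (oseq (a i)) (fun n => pi ^' r *' oseq u n) ->
     (forall n, (1 <= n)%nat -> Pb (oseq u n) = false) -> Nat.modulo r (2 * m) = Nat.modulo k (2 * m) -> False).
  { intros i r u -> Ha Hp Hr. assert (r = r5).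
    { apply (val_unique r r5 (oseq u) (oseq u5)); auto. apply (congr_eqS_trans (a i5)); auto. }
    subst r. apply (mod_shift_ne k jj (2 * m)); auto. congruence. }
  assert (d15 : i1 <> i5) by (intro E; apply (Dist i1 r1 u1); auto).
  assert (d25 : i2 <> i5) by (intro E; apply (Dist i2 r2 u2); auto).
  assert (d35 : i3 <> i5) by (intro E; apply (Dist i3 r3 u3); auto).
  assert (d45 : i4 <> i5) by (intro E; apply (Dist i4 r4 u4); auto).
  destruct (model jj c c' Hjj (oseq u1 5) (oseq u2 5) (oseq u3 5) (oseq u4 5) (oseq u5 5))
    as [o1 [o2 [o5 [Hnz [Ho1 [Ho2 [Ho5 Hv]]]]]]]; try (apply Hc1 || apply Hc2 || apply Hc3 || apply Hc4); try lia.
  apply Hp5; lia.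
  destruct (Nat.eq_dec o1 0) as [E0|E0].
  - assert (o2 <> 0%nat) by lia.
    apply (core m hm s a i3 i4 i1 i2 i5 H3 H4 H1 H2 H5 n34 (not_eq_sym n13) (not_eq_sym n23) d35
      (not_eq_sym n14) (not_eq_sym n24) d45 n12 d15 d25
      r3 r4 r1 r2 r5 u3 u4 u1 u2 u5 k jj Hjj Ha3 Ha4 Ha1 Ha2 Ha5 Hp3 Hr3 Hr4 Hr1 Hr2 Hr5
      o2 o1 o5); auto.
    replace (pv D (oseq u3 5) (oseq u4 5) o2 +' pv D (oseq u1 5) (oseq u2 5) o1 +' Fv D jj (oseq u5 5) o5)
      with (pv D (oseq u1 5) (oseq u2 5) o1 +' pv D (oseq u3 5) (oseq u4 5) o2 +' Fv D jj (oseq u5 5) o5)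
      by ring. exact Hv.
  - apply (core m hm s a i1 i2 i3 i4 i5 H1 H2 H3 H4 H5 n12 n13 n14 d15 n23 n24 d25 n34 d35 d45
      r1 r2 r3 r4 r5 u1 u2 u3 u4 u5 k jj Hjj Ha1 Ha2 Ha3 Ha4 Ha5 Hp1 Hr1 Hr2 Hr3 Hr4 Hr5
      o1 o2 o5); auto.
Qed.
End WithD.
End Alg.

Theorem lemma8 (D : Z) (hD : ramified_D D) (m d s : nat)
  (hm : Nat.odd m = true) (hm3 : (3 <= m)%nat) (hd : d = (2 * m)%nat)
  (a : nat -> Oel)
  (ha : forall i, (i < s)%nat -> ~ eqS (oseq (a i)) (fun _ => zeroZD))
  (k : nat)
  (hpairs : exists i1 i2 i3 i4 : nat, exists c c' : bool,
      (i1 < s)%nat /\ (i2 < s)%nat /\ (i3 < s)%nat /\ (i4 < s)%nat /\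
      i1 <> i2 /\ i1 <> i3 /\ i1 <> i4 /\ i2 <> i3 /\ i2 <> i4 /\ i3 <> i4 /\
      level_coef D d (a i1) k c /\ level_coef D d (a i2) k c /\
      level_coef D d (a i3) k c' /\ level_coef D d (a i4) k c')
  (hnext : exists j : nat, (j < s)%nat /\
      (at_level D d (a j) (k + 2) \/ at_level D d (a j) (k + 3) \/
       at_level D d (a j) (k + 4))) :
  has_nontrivial_zero_K D d s a.
Proof.
  exact (main_D D hD m d s hm hm3 hd a k hpairs hnext).
Qed.
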